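(* $$\zeta(3)=\frac{4\pi^2}{21}\log\left(\frac{e^{\frac{4G}{\pi}}\,\mathcal C_3\left(\frac14\right)^{16}}{\sqrt2}\right).$$
   Context: $\zeta$ is the Riemann zeta function and $G=\sum_{n\ge0}\frac{(-1)^n}{(2n+1)^2}$ is Catalan's constant. $\mathcal C_3(x)=\prod_{n\ge1,\ n\text{ odd}}\left\{\left(1-\frac{x^2}{(n/2)^2}\right)^{(n/2)^2}e^{x^2}\right\}$ for real $|x|<\tfrac12$ (the order-3 Kurokawa–Koyama multiple cosine function; the product converges to a positive number). *)

(* Defs.v *)
From Stdlib Require Import Reals.
From Coquelicot Require Import Coquelicot.
Open Scope R_scope.

Definition zeta3 : R := Series (fun n : nat => / (INR (S n)) ^ 3).

Definition catalan : R := Series (fun n : nat => (-1) ^ n / (INR (2 * n + 1)) ^ 2).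

(* The factor of C_3 indexed by the odd integer n = 2k+1, with a = n/2:
   (1 - x^2/a^2)^(a^2) * e^(x^2)  (real power, the base is > 0 for |x| < 1/2). *)
Definition C3_factor (x : R) (k : nat) : R :=
  let a := INR (2 * k + 1) / 2 in
  Rpower (1 - x ^ 2 / a ^ 2) (a ^ 2) * exp (x ^ 2).

Fixpoint C3_partial (x : R) (N : nat) : R :=
  match N with
  | O => 1
  | S N' => C3_partial x N' * C3_factor x N'
  end.

Definition C3 (x : R) : R := real (Lim_seq (C3_partial x)).

(* Main.v *)
Require Import Defs.
From Stdlib Require Import Reals Lra Lia.
From Coquelicot Require Import Coquelicot.
Open Scope R_scope.

Ltac req := match goal with |- ?a = ?b => change (@eq R a b) end.


Fixpoint psum (a : nat -> R) (n : nat) : R :=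
  match n with O => 0 | S k => psum a k + a k end.

Lemma psum_ext a b n : (forall k, (k < n)%nat -> a k = b k) -> psum a n = psum b n.
Proof.
  induction n; intros H; simpl; auto.
  rewrite IHn by (intros; apply H; lia). rewrite H by lia. auto.
Qed.

Lemma sum_n_psum a n : sum_n a n = psum a (S n).
Proof.
  induction n.
  - rewrite sum_O. simpl. rewrite Rplus_0_l. reflexivity.
  - rewrite sum_Sn, IHn. simpl. unfold plus; simpl. ring.
Qed.

Lemma is_series_psum a (l:R) : is_lim_seq (psum a) l -> is_series a l.
Proof.
  intros H. apply is_lim_seq_incr_1 in H.
  unfold is_series. apply (is_lim_seq_ext (fun n => psum a (S n)) (sum_n a)) in H.
  exact H. intros; rewrite sum_n_psum; auto.
Qed.

Lemma psum_is_series a (l:R) : is_series a l -> is_lim_seq (psum a) l.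
Proof.
  intros H. apply is_lim_seq_incr_1.
  apply (is_lim_seq_ext (sum_n a)). intros; apply sum_n_psum. exact H.
Qed.

Lemma lim_inv_n : is_lim_seq (fun n => / (INR n + 1)) 0.
Proof.
  replace (Finite 0) with (Rbar_inv p_infty) by reflexivity.
  apply is_lim_seq_inv. 2: discriminate.
  eapply is_lim_seq_plus. apply is_lim_seq_INR. apply is_lim_seq_const. simpl. reflexivity.
Qed.

Lemma lim_C_inv_n C : is_lim_seq (fun n => C / (INR n + 1)) 0.
Proof.
  replace (Finite 0) with (Rbar_mult C 0) by (simpl; f_equal; ring).
  apply (is_lim_seq_ext (fun n => C * / (INR n + 1))). intros; unfold Rdiv; auto.
  apply is_lim_seq_scal_l. apply lim_inv_n.
Qed.

Lemma INR_pos n : 0 < INR n + 1.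
Proof. pose proof (pos_INR n). lra. Qed.

Lemma tele_diff a C : (forall m, Rabs (a m) <= C * (/ (INR m + 1) - / (INR m + 2))) ->
  forall N d, Rabs (psum a (N + d) - psum a N) <= C * (/ (INR N + 1) - / (INR (N + d) + 1)).
Proof.
  intros H N d. induction d.
  - rewrite Nat.add_0_r. rewrite Rminus_diag, Rabs_R0. lra.
  - replace (N + S d)%nat with (S (N + d)) by lia. simpl psum.
    replace (psum a (N + d) + a (N + d)%nat - psum a N) with ((psum a (N + d) - psum a N) + a (N+d)%nat) by ring.
    eapply Rle_trans. apply Rabs_triang.
    eapply Rle_trans. apply Rplus_le_compat. apply IHd. apply H.
    rewrite S_INR. right. replace (INR (N + d) + 1 + 1) with (INR (N+d) + 2) by ring. ring.
Qed.

Lemma tele_C_nonneg a C : (forall m, Rabs (a m) <= C * (/ (INR m + 1) - / (INR m + 2))) -> 0 <= C.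
Proof.
  intros H. specialize (H O). simpl in H.
  pose proof (Rabs_pos (a O)).
  assert (/ (0 + 1) - / (0 + 2) = /2) by field. rewrite H1 in H.
  nra.
Qed.

Lemma tele_ex a C : (forall m, Rabs (a m) <= C * (/ (INR m + 1) - / (INR m + 2))) ->
  exists l : R, is_lim_seq (psum a) l.
Proof.
  intros H.
  assert (Hb : is_lim_seq (psum (fun m => C * (/ (INR m + 1) - / (INR m + 2)))) C).
  { apply (is_lim_seq_ext (fun n => C - C / (INR n + 1))).
    - intros n; induction n. simpl. field. simpl psum. rewrite <- IHn. rewrite S_INR. field.
      split; pose proof (pos_INR n); lra.
    - replace (Finite C) with (Finite (C - 0)) by (f_equal; ring).
      apply is_lim_seq_minus'. apply is_lim_seq_const. apply lim_C_inv_n. }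
  assert (ex_series a).
  { apply (ex_series_le a (fun m => C * (/ (INR m + 1) - / (INR m + 2)))).
    intros n. apply H. exists C; apply is_series_psum; exact Hb. }
  exists (Series a). apply psum_is_series. apply Series_correct; auto.
Qed.

Lemma tele_tail a C (l:R) : (forall m, Rabs (a m) <= C * (/ (INR m + 1) - / (INR m + 2))) ->
  is_lim_seq (psum a) l -> forall N, Rabs (l - psum a N) <= C / (INR N + 1).
Proof.
  intros H Hl N.
  pose proof (tele_C_nonneg a C H) as HC.
  assert (Hl2 : is_lim_seq (fun d => Rabs (psum a (d + N) - psum a N)) (Rabs (l - psum a N))).
  { apply (is_lim_seq_abs _ (l - psum a N)). apply is_lim_seq_minus'.
    apply is_lim_seq_incr_n. exact Hl. apply is_lim_seq_const. }
  assert (Rbar_le (Rabs (l - psum a N)) (C / (INR N + 1))).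
  { eapply is_lim_seq_le. 2: exact Hl2. 2: apply is_lim_seq_const.
    intros d. simpl. rewrite Nat.add_comm. eapply Rle_trans. apply tele_diff. exact H.
    unfold Rdiv. pose proof (INR_pos (N + d)).
    assert (0 < / (INR (N + d) + 1)) by (apply Rinv_0_lt_compat; lra). nra. }
  simpl in H0. exact H0.
Qed.

Lemma abs_le_inv x y : Rabs x <= y -> - y <= x <= y.
Proof. unfold Rabs; destruct Rcase_abs; intros; lra. Qed.


Lemma PI_gt3 : 3 < PI.
Proof. pose proof PI2_3_2; lra. Qed.

Lemma fact_Z n : INR (Factorial.fact n) = IZR (Z.of_nat (Factorial.fact n)).
Proof. apply INR_IZR_INZ. Qed.

Lemma sl_eq x : sin_lb x = x - x^3/6 + x^5/120 - x^7/5040.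
Proof. unfold sin_lb, sin_approx, sin_term. cbn [sum_f_R0].
 change (2*0+1)%nat with 1%nat. change (2*1+1)%nat with 3%nat. change (2*2+1)%nat with 5%nat. change (2*3+1)%nat with 7%nat.
 rewrite !fact_Z.
 change (Z.of_nat (Factorial.fact 1)) with 1%Z. change (Z.of_nat (Factorial.fact 3)) with 6%Z.
 change (Z.of_nat (Factorial.fact 5)) with 120%Z. change (Z.of_nat (Factorial.fact 7)) with 5040%Z.
 field.
Qed.
Lemma su_eq x : sin_ub x = x - x^3/6 + x^5/120 - x^7/5040 + x^9/362880.
Proof. unfold sin_ub, sin_approx, sin_term. cbn [sum_f_R0].
 change (2*0+1)%nat with 1%nat. change (2*1+1)%nat with 3%nat. change (2*2+1)%nat with 5%nat. change (2*3+1)%nat with 7%nat.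
 change (2*4+1)%nat with 9%nat.
 rewrite !fact_Z.
 change (Z.of_nat (Factorial.fact 1)) with 1%Z. change (Z.of_nat (Factorial.fact 3)) with 6%Z.
 change (Z.of_nat (Factorial.fact 5)) with 120%Z. change (Z.of_nat (Factorial.fact 7)) with 5040%Z.
 change (Z.of_nat (Factorial.fact 9)) with 362880%Z.
 field.
Qed.
Lemma cl_eq x : cos_lb x = 1 - x^2/2 + x^4/24 - x^6/720.
Proof. unfold cos_lb, cos_approx, cos_term. cbn [sum_f_R0].
 change (2*0)%nat with 0%nat. change (2*1)%nat with 2%nat. change (2*2)%nat with 4%nat. change (2*3)%nat with 6%nat.
 rewrite !fact_Z.
 change (Z.of_nat (Factorial.fact 0)) with 1%Z. change (Z.of_nat (Factorial.fact 2)) with 2%Z.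
 change (Z.of_nat (Factorial.fact 4)) with 24%Z. change (Z.of_nat (Factorial.fact 6)) with 720%Z.
 field.
Qed.
Lemma cu_eq x : cos_ub x = 1 - x^2/2 + x^4/24 - x^6/720 + x^8/40320.
Proof. unfold cos_ub, cos_approx, cos_term. cbn [sum_f_R0].
 change (2*0)%nat with 0%nat. change (2*1)%nat with 2%nat. change (2*2)%nat with 4%nat. change (2*3)%nat with 6%nat.
 change (2*4)%nat with 8%nat.
 rewrite !fact_Z.
 change (Z.of_nat (Factorial.fact 0)) with 1%Z. change (Z.of_nat (Factorial.fact 2)) with 2%Z.
 change (Z.of_nat (Factorial.fact 4)) with 24%Z. change (Z.of_nat (Factorial.fact 6)) with 720%Z.
 change (Z.of_nat (Factorial.fact 8)) with 40320%Z.
 field.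
Qed.

Lemma trig_bounds x : 0 <= x <= 1 -> 5*x/6 <= sin x /\ Rabs (x * cos x - sin x) <= x^3/2.
Proof.
  intros Hx. pose proof PI_gt3 as H3.
  destruct (SIN x) as [Hs1 Hs2]; try lra.
  destruct (COS x) as [Hc1 Hc2]; try lra.
  rewrite sl_eq in Hs1. rewrite su_eq in Hs2. rewrite cl_eq in Hc1. rewrite cu_eq in Hc2.
  assert (x^2 <= 1) by nra. assert (x^3 <= x^2) by (simpl; nra). assert (0 <= x^3) by (simpl; nra).
  assert (x^5 <= x^3) by (replace (x^5) with (x^3*x^2) by ring; nra).
  assert (x^7 <= x^5) by (replace (x^7) with (x^5*x^2) by ring; assert (0<=x^5) by (replace (x^5) with (x^3*x^2) by ring; nra); nra).
  assert (0 <= x^5) by (replace (x^5) with (x^3*x^2) by ring; nra).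
  assert (0 <= x^7) by (replace (x^7) with (x^5*x^2) by ring; nra).
  assert (x^9 <= x^7) by (replace (x^9) with (x^7*x^2) by ring; nra).
  assert (0 <= x^9) by (replace (x^9) with (x^7*x^2) by ring; nra).
  split. nra.
  apply Rabs_le. split.
  - assert (HH : x * cos x >= x * (1 - x^2/2 + x^4/24 - x^6/720)) by nra.
    replace (x * (1 - x ^ 2 / 2 + x ^ 4 / 24 - x ^ 6 / 720)) with (x - x^3/2 + x^5/24 - x^7/720) in HH by field.
    nra.
  - assert (HH : x * cos x <= x * (1 - x^2/2 + x^4/24 - x^6/720 + x^8/40320)) by nra.
    replace (x * (1 - x ^ 2 / 2 + x ^ 4 / 24 - x ^ 6 / 720 + x^8/40320)) with (x - x^3/2 + x^5/24 - x^7/720 + x^9/40320) in HH by field.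
    nra.
Qed.

Definition rho0 (y : R) : R := PI * cos (PI * y) / sin (PI * y) - / y.

Lemma rho0_0 : rho0 0 = 0.
Proof. unfold rho0. rewrite Rmult_0_r, sin_0, Rinv_0. unfold Rdiv. rewrite Rinv_0. ring. Qed.

Lemma rho0_odd y : rho0 (- y) = - rho0 y.
Proof. unfold rho0. replace (PI * - y) with (- (PI * y)) by ring. rewrite sin_neg, cos_neg.
  unfold Rdiv. rewrite !Rinv_opp. ring. Qed.

Lemma rho0_small y : 0 < y <= 1/4 -> Rabs (rho0 y) <= 10 * y.
Proof.
  intros Hy. pose proof PI_gt3. pose proof PI_4.
  set (x := PI * y).
  assert (Hx : 0 < x <= 1) by (unfold x; split; nra).
  destruct (trig_bounds x) as [Hs Hd]; try lra.
  assert (Hsp : 0 < sin x) by lra.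
  unfold rho0. fold x.
  replace (PI * cos x / sin x - / y) with (PI * (x * cos x - sin x) / (x * sin x)).
  2:{ assert (sin x <> 0) by lra. assert (y <> 0) by lra. assert (PI <> 0) by lra. unfold x in *. field. auto. }
  unfold Rdiv. rewrite Rabs_mult, Rabs_mult, (Rabs_right PI) by lra.
  rewrite (Rabs_right (/ (x * sin x))). 2: { apply Rle_ge, Rlt_le, Rinv_0_lt_compat. nra. }
  apply (Rmult_le_reg_r (x * sin x)). nra.
  rewrite Rmult_assoc, Rmult_assoc, Rinv_l by nra. rewrite Rmult_1_r.
  assert (PI * (x^3/2) <= 10 * y * (x * (5*x/6))).
  { replace (PI * (x^3/2)) with (x*x*(PI*x/2)) by field. replace (10 * y * (x * (5 * x / 6))) with (x*x*(25*y/3)) by field.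
    apply Rmult_le_compat_l. nra. unfold x. assert (PI*PI <= 16) by nra. nra. }
  assert (10 * y * (x * (5 * x / 6)) <= 10 * y * (x * sin x)).
  { apply Rmult_le_compat_l. lra. apply Rmult_le_compat_l; lra. }
  assert (PI * Rabs (x * cos x - sin x) <= PI * (x^3/2)) by (apply Rmult_le_compat_l; lra).
  lra.
Qed.

Lemma rho0_cont0 : continuity_pt rho0 0.
Proof.
  unfold continuity_pt, continue_in, limit1_in, limit_in. simpl. unfold R_dist.
  intros eps Heps. exists (Rmin (1/4) (eps / 20)). split.
  apply Rmin_pos; lra.
  intros y [_ Hy]. rewrite rho0_0. rewrite Rminus_0_r in *.
  assert (Hy1 : Rabs y < 1/4) by (eapply Rlt_le_trans; [exact Hy | apply Rmin_l]).
  assert (Hy2 : Rabs y < eps/20) by (eapply Rlt_le_trans; [exact Hy | apply Rmin_r]).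
  destruct (Rtotal_order y 0) as [Hn|[Hz|Hp]].
  - rewrite <- (Ropp_involutive y), rho0_odd, Rabs_Ropp.
    rewrite Rabs_left in Hy1, Hy2 by lra.
    eapply Rle_lt_trans. apply rho0_small. lra. lra.
  - subst. rewrite rho0_0, Rabs_R0. lra.
  - rewrite Rabs_right in Hy1, Hy2 by lra.
    eapply Rle_lt_trans. apply rho0_small. lra. lra.
Qed.

Lemma sin_PIy_nz y : 0 < Rabs y < 1 -> sin (PI * y) <> 0.
Proof.
  intros Hy. pose proof PI_gt3.
  destruct (Rtotal_order y 0) as [Hn|[Hz|Hp]].
  - rewrite Rabs_left in Hy by lra.
    replace (PI * y) with (- (PI * - y)) by ring. rewrite sin_neg.
    assert (0 < sin (PI * - y)) by (apply sin_gt_0; nra). lra.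
  - subst. rewrite Rabs_R0 in Hy. lra.
  - rewrite Rabs_right in Hy by lra.
    assert (0 < sin (PI * y)) by (apply sin_gt_0; nra). lra.
Qed.

Lemma ex_derive_cpt (f : R -> R) x : ex_derive f x -> continuity_pt f x.
Proof. intros H. apply continuity_pt_filterlim. apply (ex_derive_continuous (K:=R_AbsRing) (V:=R_NormedModule)). exact H. Qed.

Lemma rho0_cont y : Rabs y < 1 -> continuity_pt rho0 y.
Proof.
  intros Hy. destruct (Req_dec y 0) as [->|Hn]. apply rho0_cont0.
  apply ex_derive_cpt. unfold rho0. auto_derive. split. apply sin_PIy_nz. split; auto. apply Rabs_pos_lt; auto.
  split; auto.
Qed.


Definition q (s : R) (m : nat) : R := / (s + INR m + 1) - / (INR m + 2 - s).
Definition Q (s : R) : R := Series (q s).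

Lemma q_bound s m : -1/2 <= s <= 3/2 -> Rabs (q s m) <= 16 * (/ (INR m + 1) - / (INR m + 2)).
Proof.
  intros Hs. pose proof (pos_INR m) as HM. set (M := INR m) in *.
  set (A := s + M + 1). set (B := M + 2 - s).
  assert (HA : M + 1/2 <= A) by (unfold A; lra). assert (HB : M + 1/2 <= B) by (unfold B; lra).
  unfold q. fold M A B.
  replace (/ A - / B) with ((1 - 2*s) / (A * B)) by (unfold A, B; field; lra).
  replace (16 * (/ (M + 1) - / (M + 2))) with (16 / ((M+1)*(M+2))) by (field; lra).
  unfold Rdiv. rewrite Rabs_mult. rewrite (Rabs_right (/ (A*B))).
  2: { apply Rle_ge, Rlt_le, Rinv_0_lt_compat. nra. }
  assert (H12 : Rabs (1 - 2*s) <= 2) by (apply Rabs_le; lra).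
  apply (Rmult_le_reg_r (A * B)). nra.
  rewrite Rmult_assoc, Rinv_l by nra. rewrite Rmult_1_r.
  apply (Rmult_le_reg_r ((M+1)*(M+2))). nra.
  replace (16 * / ((M + 1) * (M + 2)) * (A * B) * ((M + 1) * (M + 2))) with (16 * (A*B)) by (field; lra).
  assert (0 <= Rabs (1 - 2 * s)) by apply Rabs_pos.
  assert ((M+1/2)*(M+1/2) <= A * B) by nra.
  nra.
Qed.

Lemma Q_lim s : -1/2 <= s <= 3/2 -> is_lim_seq (psum (q s)) (Q s).
Proof.
  intros Hs. destruct (tele_ex (q s) 16) as [l Hl]. intros; apply q_bound; auto.
  unfold Q. rewrite (is_series_unique (q s) l). auto. apply is_series_psum; auto.
Qed.

Lemma Q_tail s N : -1/2 <= s <= 3/2 -> Rabs (Q s - psum (q s) N) <= 16 / (INR N + 1).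
Proof. intros Hs. apply tele_tail. intros; apply q_bound; auto. apply Q_lim; auto. Qed.

Lemma psum_q_der N s : -1/2 < s < 3/2 -> ex_derive (fun s => psum (q s) N) s.
Proof.
  intros Hs. induction N.
  - simpl. apply ex_derive_const.
  - simpl. apply (ex_derive_plus (fun s => psum (q s) N) (fun s => q s N)). auto.
    unfold q. pose proof (pos_INR N). auto_derive. repeat split; lra.
Qed.

Lemma eventually_small C eps : 0 < eps -> exists N, C / (INR N + 1) < eps.
Proof.
  intros He. pose proof (lim_C_inv_n C) as H. apply is_lim_seq_spec in H.
  destruct (H (mkposreal eps He)) as [N HN]. exists N. specialize (HN N (le_n _)).
  simpl in HN. rewrite Rminus_0_r in HN. apply Rabs_def2 in HN. lra.
Qed.

Lemma Q_cont s0 : -1/2 < s0 < 3/2 -> continuity_pt Q s0.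
Proof.
  intros Hs0.
  unfold continuity_pt, continue_in, limit1_in, limit_in. simpl. unfold R_dist.
  intros eps Heps.
  destruct (eventually_small 16 (eps/3)) as [N HN]. lra.
  pose proof (ex_derive_cpt _ _ (psum_q_der N s0 Hs0)) as Hc.
  unfold continuity_pt, continue_in, limit1_in, limit_in in Hc. simpl in Hc. unfold R_dist in Hc.
  destruct (Hc (eps/3)) as [d1 [Hd1 Hd]]. lra.
  exists (Rmin d1 (Rmin (s0 + 1/2) (3/2 - s0))). split.
  { apply Rmin_pos. lra. apply Rmin_pos; lra. }
  intros s [Hns Hsd].
  assert (Hs1 : Rabs (s - s0) < d1) by (eapply Rlt_le_trans; [exact Hsd| apply Rmin_l]).
  assert (Hs2 : Rabs (s - s0) < Rmin (s0 + 1/2) (3/2 - s0)) by (eapply Rlt_le_trans; [exact Hsd| apply Rmin_r]).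
  assert (Hs3 : Rabs (s - s0) < s0 + 1/2) by (eapply Rlt_le_trans; [exact Hs2| apply Rmin_l]).
  assert (Hs4 : Rabs (s - s0) < 3/2 - s0) by (eapply Rlt_le_trans; [exact Hs2| apply Rmin_r]).
  apply Rabs_def2 in Hs3. apply Rabs_def2 in Hs4.
  specialize (Hd s (conj Hns Hs1)).
  pose proof (Q_tail s N ltac:(lra)). pose proof (Q_tail s0 N ltac:(lra)).
  replace (Q s - Q s0) with ((Q s - psum (q s) N) + (psum (q s) N - psum (q s0) N) - (Q s0 - psum (q s0) N)) by ring.
  revert H H0 Hd HN. generalize (Q s - psum (q s) N) (psum (q s) N - psum (q s0) N) (Q s0 - psum (q s0) N).
  intros x y z H1 H2 H3 H4. unfold Rabs in *. repeat destruct Rcase_abs; lra.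
Qed.

Definition sigma (s : R) : R := / 2 * rho0 (s / 2) + / 2 * rho0 ((s - 1) / 2).
Definition Hf (s : R) : R := sigma s - Q s.

Lemma cpt_lin (f : R -> R) a b x : continuity_pt f (a * x + b) -> continuity_pt (fun y => f (a * y + b)) x.
Proof.
  intros H. apply (continuity_pt_comp (fun y => a * y + b) f x). 2: exact H.
  apply ex_derive_cpt. auto_derive. auto.
Qed.

Lemma Hf_cont s : 0 <= s <= 1 -> continuity_pt Hf s.
Proof.
  intros Hs. unfold Hf, sigma.
  apply continuity_pt_minus. 2: apply Q_cont; lra.
  apply continuity_pt_plus.
  - apply (continuity_pt_scal (fun s => rho0 (s / 2))).
    apply (continuity_pt_ext (fun y => rho0 (/2 * y + 0))). intros; f_equal; field.
    apply cpt_lin. apply rho0_cont. apply Rabs_def1; lra.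
  - apply (continuity_pt_scal (fun s => rho0 ((s - 1) / 2))).
    apply (continuity_pt_ext (fun y => rho0 (/2 * y + - /2))). intros; f_equal; field.
    apply cpt_lin. apply rho0_cont. apply Rabs_def1; lra.
Qed.

Lemma lim_uniq u (a b : R) : is_lim_seq u a -> is_lim_seq u b -> a = b.
Proof.
  intros Ha Hb. apply is_lim_seq_unique in Ha. apply is_lim_seq_unique in Hb.
  rewrite Ha in Hb. injection Hb. auto.
Qed.

Lemma lim_one_minus : is_lim_seq (fun N => 1 - / (INR N + 1)) 1.
Proof.
  replace (Finite 1) with (Finite (1 - 0)) by (f_equal; ring).
  apply is_lim_seq_minus'. apply is_lim_seq_const. apply lim_inv_n.
Qed.

Lemma Q0 : Q 0 = 1.
Proof.
  apply (lim_uniq (psum (q 0))). apply Q_lim; lra.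
  apply (is_lim_seq_ext (fun N => 1 - / (INR N + 1))). 2: apply lim_one_minus.
  intros N. induction N. simpl. field. simpl psum. rewrite <- IHN. unfold q. rewrite S_INR.
  pose proof (pos_INR N). field. lra.
Qed.

Lemma Q1 : Q 1 = -1.
Proof.
  apply (lim_uniq (psum (q 1))). apply Q_lim; lra.
  apply (is_lim_seq_ext (fun N => - (1 - / (INR N + 1)))).
  2: { replace (Finite (-1)) with (Rbar_opp 1) by reflexivity. apply -> is_lim_seq_opp. apply lim_one_minus. }
  intros N. induction N. simpl. field. simpl psum. rewrite <- IHN. unfold q. rewrite S_INR.
  pose proof (pos_INR N). field. lra.
Qed.

Lemma Hf0 : Hf 0 = 0.
Proof.
  unfold Hf, sigma. rewrite Q0. replace (0/2) with 0 by field. rewrite rho0_0.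
  unfold rho0. replace (PI * ((0 - 1) / 2)) with (- (PI/2)) by field.
  rewrite cos_neg, sin_neg, cos_PI2, sin_PI2. field.
Qed.

Lemma Hf1 : Hf 1 = 0.
Proof.
  unfold Hf, sigma. rewrite Q1. replace ((1-1)/2) with 0 by field. rewrite rho0_0.
  unfold rho0. replace (PI * (1 / 2)) with (PI/2) by field.
  rewrite cos_PI2, sin_PI2. field.
Qed.

Definition cc (s : R) : R := PI * cos (PI * s) / sin (PI * s).
Definition p (s : R) (m : nat) : R := / (s + INR m) - / (INR m + 1 - s).
Definition Pf (s : R) : R := / s - / (1 - s) + Q s.

Lemma psum_shift a N : psum a (S N) = a O + psum (fun m => a (S m)) N.
Proof. induction N. simpl. ring. simpl psum. simpl psum in IHN. rewrite IHN. ring. Qed.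

Lemma P_lim s : 0 < s < 1 -> is_lim_seq (psum (p s)) (Pf s).
Proof.
  intros Hs. apply is_lim_seq_incr_1.
  apply (is_lim_seq_ext (fun N => p s O + psum (q s) N)).
  - intros N. rewrite psum_shift. f_equal. apply psum_ext. intros k _. unfold p, q. rewrite S_INR.
    f_equal; f_equal; ring.
  - unfold Pf. apply is_lim_seq_plus'. replace (/ s - / (1 - s)) with (p s O).
    apply is_lim_seq_const. unfold p. simpl. f_equal; f_equal; ring.
    apply Q_lim; lra.
Qed.

Lemma psum_S a n : psum a (S n) = psum a n + a n.
Proof. reflexivity. Qed.

Lemma p_dup s N : 0 < s < 1 ->
  psum (p (s/2)) N + psum (p ((s+1)/2)) N = 2 * psum (p s) (2*N).
Proof.
  intros Hs. induction N.
  - simpl. ring.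
  - replace (2 * S N)%nat with (S (S (2 * N))) by lia. rewrite !psum_S.
    replace (psum (p (s / 2)) N + p (s / 2) N + (psum (p ((s + 1) / 2)) N + p ((s + 1) / 2) N))
      with ((psum (p (s / 2)) N + psum (p ((s + 1) / 2)) N) + (p (s / 2) N + p ((s + 1) / 2) N)) by ring.
    rewrite IHN. unfold p. rewrite S_INR, mult_INR. simpl (INR 2).
    pose proof (pos_INR N). field. repeat split; lra.
Qed.

Lemma filterlim_double : filterlim (fun n => (2 * n)%nat) eventually eventually.
Proof.
  intros P [N HN]. exists N. intros n Hn. apply HN. lia.
Qed.

Lemma P_dup s : 0 < s < 1 -> Pf (s/2) + Pf ((s+1)/2) = 2 * Pf s.
Proof.
  intros Hs. apply (lim_uniq (fun N => psum (p (s/2)) N + psum (p ((s+1)/2)) N)).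
  - apply is_lim_seq_plus'; apply P_lim; lra.
  - apply (is_lim_seq_ext (fun N => 2 * psum (p s) (2*N))). intros; rewrite p_dup; auto.
    replace (Finite (2 * Pf s)) with (Rbar_mult 2 (Pf s)) by reflexivity.
    apply is_lim_seq_scal_l.
    apply (is_lim_seq_subseq (psum (p s)) (Pf s) (fun n => (2*n)%nat)). apply filterlim_double.
    apply P_lim; auto.
Qed.

Lemma trig_half a : 0 < a < PI/2 ->
  PI * cos a / sin a + PI * cos (a + PI/2) / sin (a + PI/2) = 2 * (PI * cos (2*a) / sin (2*a)).
Proof.
  intros Ha. pose proof PI_gt3.
  assert (0 < sin a) by (apply sin_gt_0; lra). assert (0 < cos a) by (apply cos_gt_0; lra).
  rewrite cos_plus, sin_plus, cos_PI2, sin_PI2, sin_2a, cos_2a. field. lra.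
Qed.

Lemma cc_dup s : 0 < s < 1 -> cc (s/2) + cc ((s+1)/2) = 2 * cc s.
Proof.
  intros Hs. pose proof PI_gt3. unfold cc.
  replace (PI * ((s+1)/2)) with (PI * (s/2) + PI/2) by field.
  assert (E: PI * s = 2 * (PI * (s/2))) by field. rewrite E.
  apply trig_half. split; nra.
Qed.

Lemma sigma_eq s : 0 < s < 1 -> sigma s = cc s - / s + / (1 - s).
Proof.
  intros Hs. pose proof PI_gt3.
  assert (E : rho0 ((s-1)/2) = cc ((s+1)/2) - 2 / (s - 1)).
  { unfold rho0, cc. replace (PI * ((s - 1) / 2)) with (PI * (s/2) - PI/2) by field.
    replace (PI * ((s + 1) / 2)) with (PI * (s/2) + PI/2) by field.
    rewrite cos_plus, sin_plus, cos_minus, sin_minus, cos_PI2, sin_PI2.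
    assert (0 < cos (PI * (s/2))) by (apply cos_gt_0; nra).
    field. split; lra. }
  unfold sigma. rewrite E.
  assert (0 < sin (PI * (s/2))) by (apply sin_gt_0; nra).
  assert (rho0 (s/2) = cc (s/2) - 2 / s) by (unfold rho0, cc; field; split; lra).
  rewrite H1. assert (cc s = (cc (s/2) + cc ((s+1)/2))/2) by (rewrite cc_dup; [field|auto]). rewrite H2. field. lra.
Qed.

Lemma Hf_eq s : 0 < s < 1 -> Hf s = cc s - Pf s.
Proof. intros Hs. unfold Hf, Pf. rewrite sigma_eq by auto. ring. Qed.

Lemma Hf_dup s : 0 < s < 1 -> Hf (s/2) + Hf ((s+1)/2) = 2 * Hf s.
Proof.
  intros Hs. rewrite !Hf_eq by lra.
  replace (cc (s / 2) - Pf (s / 2) + (cc ((s + 1) / 2) - Pf ((s + 1) / 2)))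
    with ((cc (s/2) + cc ((s+1)/2)) - (Pf (s/2) + Pf ((s+1)/2))) by ring.
  rewrite cc_dup, P_dup by auto. ring.
Qed.


Lemma half_pow j : 0 < (/2)^j <= 1.
Proof. induction j. simpl; lra. simpl. lra. Qed.

Lemma herglotz_le (f : R -> R) :
  (forall s, 0 <= s <= 1 -> continuity_pt f s) -> f 0 = 0 -> f 1 = 0 ->
  (forall s, 0 < s < 1 -> f (s/2) + f ((s+1)/2) = 2 * f s) ->
  forall s, 0 <= s <= 1 -> f s <= 0.
Proof.
  intros Hc H0 H1 Hd.
  destruct (continuity_ab_maj f 0 1 ltac:(lra) Hc) as [Mx [HM HMx]].
  assert (f Mx <= 0).
  { destruct (Req_dec Mx 0) as [->|Hn0]. lra.
    destruct (Req_dec Mx 1) as [->|Hn1]. lra.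
    assert (Hin : 0 < Mx < 1) by lra.
    assert (Hall : forall j, f (Mx * (/2)^j) = f Mx).
    { induction j. simpl. rewrite Rmult_1_r. auto.
      pose proof (half_pow j) as Hp.
      set (t := Mx * (/2)^j).
      assert (Ht : 0 < t < 1) by (unfold t; split; nra).
      specialize (Hd t Ht). assert (Eq : f t = f Mx) by exact IHj. rewrite Eq in Hd.
      assert (f (t/2) <= f Mx) by (apply HM; lra).
      assert (f ((t+1)/2) <= f Mx) by (apply HM; lra).
      replace (Mx * (/2)^(S j)) with (t/2) by (unfold t; simpl; field). lra. }
    assert (Hl : is_lim_seq (fun j => f (Mx * (/2)^j)) (f 0)).
    { apply is_lim_seq_continuous. apply Hc; lra.
      replace (Finite 0) with (Rbar_mult Mx 0) by (simpl; f_equal; ring).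
      apply is_lim_seq_scal_l. apply is_lim_seq_geom. rewrite Rabs_right; lra. }
    rewrite H0 in Hl.
    assert (f Mx = 0). apply (lim_uniq (fun j => f (Mx * (/2)^j))); auto.
    apply (is_lim_seq_ext (fun _ => f Mx)). intros; rewrite Hall; auto. apply is_lim_seq_const.
    lra. }
  intros s Hs. specialize (HM s Hs). lra.
Qed.

Lemma herglotz (f : R -> R) :
  (forall s, 0 <= s <= 1 -> continuity_pt f s) -> f 0 = 0 -> f 1 = 0 ->
  (forall s, 0 < s < 1 -> f (s/2) + f ((s+1)/2) = 2 * f s) ->
  forall s, 0 <= s <= 1 -> f s = 0.
Proof.
  intros Hc H0 H1 Hd s Hs.
  pose proof (herglotz_le f Hc H0 H1 Hd s Hs).
  pose proof (herglotz_le (fun x => - f x)) as Hn.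
  assert (- f s <= 0).
  { apply (Hn); auto.
    - intros; apply continuity_pt_opp; auto.
    - rewrite H0; ring.
    - rewrite H1; ring.
    - intros x Hx. pose proof (Hd x Hx). lra. }
  lra.
Qed.

Lemma Hf_zero s : 0 <= s <= 1 -> Hf s = 0.
Proof. apply herglotz. apply Hf_cont. apply Hf0. apply Hf1. apply Hf_dup. Qed.

Definition u (t : R) (k : nat) : R := 8 * t / ((2 * INR k + 1)^2 - 4 * t^2).

Lemma tan_pf t : -1/2 < t < 1/2 -> is_lim_seq (psum (u t)) (PI * tan (PI * t)).
Proof.
  intros Ht. pose proof PI_gt3.
  set (s := t + 1/2).
  assert (Hs : 0 < s < 1) by (unfold s; lra).
  assert (E : cc s = Pf s). { pose proof (Hf_zero s ltac:(lra)). rewrite Hf_eq in H0 by auto. lra. }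
  assert (Ec : cc s = - (PI * tan (PI * t))).
  { unfold cc, s, tan. replace (PI * (t + 1/2)) with (PI * t + PI/2) by field.
    rewrite cos_plus, sin_plus, cos_PI2, sin_PI2.
    assert (0 < cos (PI * t)) by (apply cos_gt_0; nra). field. lra. }
  apply (is_lim_seq_ext (fun N => - psum (p s) N)).
  - intros N. induction N. simpl; ring. rewrite !psum_S. rewrite <- IHN.
    unfold p, u, s. pose proof (pos_INR N).
    field. repeat split; try lra. nra.
  - replace (Finite (PI * tan (PI * t))) with (Rbar_opp (Pf s)).
    apply -> is_lim_seq_opp. apply P_lim; auto.
    simpl. f_equal. lra.
Qed.


Definition ak (k : nat) : R := INR (2 * k + 1) / 2.
Definition g (x : R) (k : nat) : R := ak k ^ 2 * ln (1 - x ^ 2 / ak k ^ 2) + x ^ 2.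

Lemma ak_eq k : ak k = (2 * INR k + 1) / 2.
Proof. unfold ak. rewrite plus_INR, mult_INR. simpl. field. Qed.

Lemma ak_ge k : 1/2 <= ak k.
Proof. rewrite ak_eq. pose proof (pos_INR k). lra. Qed.

Lemma C3_partial_exp x N : C3_partial x N = exp (psum (g x) N).
Proof.
  induction N. simpl. rewrite exp_0. auto.
  simpl. rewrite IHN. unfold C3_factor, Rpower, g, ak. rewrite <- !exp_plus. f_equal; try ring.
Qed.

Lemma C3_val x (S : R) : is_lim_seq (psum (g x)) S -> C3 x = exp S.
Proof.
  intros H. unfold C3.
  rewrite (is_lim_seq_unique (C3_partial x) (exp S)). reflexivity.
  apply (is_lim_seq_ext (fun N => exp (psum (g x) N))). intros; rewrite C3_partial_exp; auto.
  apply is_lim_seq_continuous. apply derivable_continuous_pt. apply derivable_pt_exp. auto.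
Qed.

Lemma is_derive_cpt (f : R -> R) df x : (forall y, is_derive f y (df y)) -> ex_derive df x -> continuous df x.
Proof. intros _ H. apply (ex_derive_continuous (K:=R_AbsRing) (V:=R_NormedModule)). exact H. Qed.

Lemma term_int k : is_RInt (fun t => t^2 * u t k) 0 (1/4) (- g (1/4) k).
Proof.
  set (a := ak k). pose proof (ak_ge k) as Ha. fold a in Ha.
  assert (E : forall t, (2 * INR k + 1)^2 - 4 * t^2 = (2*a)^2 - 4 * t^2).
  { intros; unfold a; rewrite ak_eq; field. }
  set (F := fun t => - (a^2 * ln (1 - t^2/a^2) + t^2)).
  replace (- g (1/4) k) with (minus (F (1/4)) (F 0)).
  2: { unfold F, g, minus, plus, opp; simpl. fold a. replace (1 - 0 * (0 * 1) / (a * (a * 1))) with 1 by (field; lra).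
       rewrite ln_1. ring. }
  apply (is_RInt_ext (V:=R_NormedModule) (fun t => t^2 * (8 * t / ((2*a)^2 - 4 * t^2)))).
  { intros t _. unfold u. rewrite E. auto. }
  apply (is_RInt_derive (V:=R_CompleteNormedModule)).
  - intros t Ht. rewrite Rmin_left, Rmax_right in Ht by lra.
    unfold F. auto_derive.
    + assert (t^2 <= 1/16) by nra. assert (1/4 <= a^2) by nra.
      assert (t^2/a^2 < 1). { apply Rmult_lt_reg_r with (a^2). nra. unfold Rdiv. rewrite Rmult_assoc, Rinv_l by nra. nra. }
      simpl in *. lra.
    + assert (t^2 <= 1/16) by nra. assert (1/4 <= a^2) by nra.
      assert (t^2/a^2 < 1). { apply Rmult_lt_reg_r with (a^2). nra. unfold Rdiv. rewrite Rmult_assoc, Rinv_l by nra. nra. }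
      simpl in *. field. repeat split; nra.
  - intros t Ht. rewrite Rmin_left, Rmax_right in Ht by lra.
    apply (ex_derive_continuous (K:=R_AbsRing) (V:=R_NormedModule)).
    auto_derive. nra.
Qed.


Definition tfun (t : R) : R := t^2 * (PI * tan (PI * t)).
Definition Ip : R := RInt tfun 0 (1/4).

Lemma cos_pos_small t : 0 <= t <= 1/4 -> 0 < cos (PI * t).
Proof. intros Ht. pose proof PI_gt3. pose proof PI_4. apply cos_gt_0; nra. Qed.

Lemma Ip_correct : is_RInt tfun 0 (1/4) Ip.
Proof.
  apply (RInt_correct (V:=R_CompleteNormedModule)).
  apply (ex_RInt_continuous (V:=R_CompleteNormedModule)).
  intros t Ht. rewrite Rmin_left, Rmax_right in Ht by lra.
  apply (ex_derive_continuous (K:=R_AbsRing) (V:=R_NormedModule)).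
  unfold tfun, tan. auto_derive. pose proof (cos_pos_small t Ht). lra.
Qed.

Lemma psum_int N : is_RInt (fun t => t^2 * psum (u t) N) 0 (1/4) (- psum (g (1/4)) N).
Proof.
  induction N.
  - simpl. apply (is_RInt_ext (V:=R_NormedModule) (fun _ => 0)). intros; req; ring.
    replace (-0) with (scal (1/4 - 0) 0). apply (is_RInt_const (V:=R_NormedModule)).
    unfold scal; simpl; unfold mult; simpl. req; ring.
  - simpl psum. apply (is_RInt_ext (V:=R_NormedModule) (fun t => plus (t^2 * psum (u t) N) (t^2 * u t N))).
    intros; unfold plus; simpl; req; ring.
    replace (- (psum (g (1/4)) N + g (1/4) N)) with (plus (- psum (g (1/4)) N) (- g (1/4) N)).
    apply (is_RInt_plus (V:=R_NormedModule)); auto. apply term_int.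
    unfold plus; simpl; ring.
Qed.

Lemma u_bound t k : 0 <= t <= 1/4 -> Rabs (u t k) <= 8 * (/ (INR k + 1) - / (INR k + 2)).
Proof.
  intros Ht. pose proof (pos_INR k) as HK. set (K := INR k) in *.
  unfold u. fold K.
  set (D := (2 * K + 1)^2 - 4 * t^2).
  assert (HD : 4*K*K + 4*K + 3/4 <= D) by (unfold D; simpl; nra).
  replace (8 * (/ (K + 1) - / (K + 2))) with (8 / ((K+1)*(K+2))) by (field; lra).
  rewrite Rabs_right. 2: { apply Rle_ge. unfold Rdiv. apply Rmult_le_pos. lra. apply Rlt_le, Rinv_0_lt_compat. nra. }
  unfold Rdiv. apply (Rmult_le_reg_r D). nra.
  rewrite Rmult_assoc, Rinv_l by nra. rewrite Rmult_1_r.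
  apply (Rmult_le_reg_r ((K+1)*(K+2))). nra.
  replace (8 * / ((K + 1) * (K + 2)) * D * ((K + 1) * (K + 2))) with (8 * D) by (field; lra).
  nra.
Qed.

Lemma tan_tail t N : 0 <= t <= 1/4 -> Rabs (PI * tan (PI * t) - psum (u t) N) <= 8 / (INR N + 1).
Proof.
  intros Ht. apply tele_tail. intros; apply u_bound; auto. apply tan_pf. lra.
Qed.

Lemma g_lim : is_lim_seq (psum (g (1/4))) (- Ip).
Proof.
  assert (B : forall N, Rabs (Ip - - psum (g (1/4)) N) <= (1/8) / (INR N + 1)).
  { intros N.
    pose proof (is_RInt_minus _ _ _ _ _ _ Ip_correct (psum_int N)) as HI.
    assert (Hn : norm (minus Ip (- psum (g (1 / 4)) N)) <= (1/4 - 0) * (/16 * (8 / (INR N + 1)))).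
    { refine (norm_RInt_le_const (V:=R_NormedModule) _ 0 (1/4) _ _ ltac:(lra) _ HI).
      intros t Ht. unfold minus, plus, opp, norm; simpl. unfold abs; simpl.
      unfold tfun. match goal with |- Rabs ?e <= _ => replace e with (t^2*(PI*tan(PI*t) - psum (u t) N)) by (simpl; ring) end.
      rewrite Rabs_mult. rewrite (Rabs_right (t^2)) by (apply Rle_ge; apply pow2_ge_0).
      apply Rmult_le_compat. apply pow2_ge_0. apply Rabs_pos. simpl; nra. apply tan_tail; auto. }
    unfold minus, plus, opp, norm in Hn; simpl in Hn. unfold abs in Hn; simpl in Hn.
    replace ((1/8) / (INR N + 1)) with ((1/4 - 0) * (/16 * (8 / (INR N + 1)))) by (field; pose proof (INR_pos N); lra).
    exact Hn. }
  apply (is_lim_seq_ext (fun N => (psum (g (1/4)) N + Ip) - Ip)). intros; ring.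
  replace (Finite (- Ip)) with (Finite (0 - Ip)) by (f_equal; ring).
  apply is_lim_seq_minus'. 2: apply is_lim_seq_const.
  apply (is_lim_seq_le_le (fun N => - ((1/8) / (INR N + 1))) _ (fun N => (1/8) / (INR N + 1))).
  - intros N. specialize (B N). apply abs_le_inv in B. split; lra.
  - replace (Finite 0) with (Rbar_opp 0) by (simpl; f_equal; ring). apply -> is_lim_seq_opp. apply lim_C_inv_n.
  - apply lim_C_inv_n.
Qed.

Lemma C3_quarter : C3 (1/4) = exp (- Ip).
Proof. apply C3_val. apply g_lim. Qed.


Lemma psum_scal c a N : psum (fun k => c * a k) N = c * psum a N.
Proof. induction N; simpl. ring. rewrite IHN. ring. Qed.

Lemma psum_plus a b N : psum (fun k => a k + b k) N = psum a N + psum b N.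
Proof. induction N; simpl. ring. rewrite IHN. ring. Qed.

Lemma trig_tel x N : cos x * psum (fun k => (-1)^k * 2 * sin (2*(INR k+1)*x)) N
  = sin x - (-1)^N * sin ((2*INR N+1)*x).
Proof.
  induction N.
  - simpl. replace ((2*0+1)*x) with x by ring. ring.
  - rewrite psum_S. rewrite Rmult_plus_distr_l, IHN.
    set (A := 2*(INR N+1)*x).
    rewrite S_INR. replace ((2*(INR N+1)+1)*x) with (A + x) by (unfold A; ring).
    replace ((2*INR N+1)*x) with (A - x) by (unfold A; ring).
    rewrite sin_plus, sin_minus. simpl. ring.
Qed.

Definition cK (k : nat) : R := 2 * (INR k + 1) * PI.
Definition w (t : R) (k : nat) : R := t^2 * (PI * ((-1)^k * 2 * sin (cK k * t))).
Definition mN (N : nat) : R := (2 * INR N + 1) * PI.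
Definition rem (N : nat) (t : R) : R := t^2 * (PI * ((-1)^N * sin (mN N * t) / cos (PI * t))).

Lemma tfun_split t N : 0 <= t <= 1/4 -> tfun t = psum (w t) N + rem N t.
Proof.
  intros Ht. pose proof (cos_pos_small t Ht) as Hc.
  pose proof (trig_tel (PI * t) N) as E.
  unfold tfun, w, rem, tan.
  rewrite (psum_ext _ (fun k => (t^2 * PI) * ((-1)^k * 2 * sin (2*(INR k+1)*(PI*t))))).
  2: { intros k _. unfold cK. replace (2 * (INR k + 1) * (PI * t)) with (2 * (INR k + 1) * PI * t) by ring. ring. }
  rewrite psum_scal. unfold mN.
  replace ((2 * INR N + 1) * PI * t) with ((2 * INR N + 1) * (PI * t)) by ring.
  set (S := psum (fun k : nat => (-1) ^ k * 2 * sin (2 * (INR k + 1) * (PI * t))) N) in *.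
  assert (S = (sin (PI * t) - (-1) ^ N * sin ((2 * INR N + 1) * (PI * t))) / cos (PI*t)).
  { rewrite <- E. field. lra. }
  rewrite H. field. lra.
Qed.

Definition Kv (k : nat) : R :=
  let c := cK k in
  PI * (-1)^k * 2 * (-(1/16) * cos (c * (1/4)) / c + (1/2) * sin (c * (1/4)) / c^2
                     + 2 * cos (c * (1/4)) / c^3 - 2 / c^3).

Lemma cK_pos k : 0 < cK k.
Proof. unfold cK. pose proof (pos_INR k). pose proof PI_gt3. nra. Qed.

Lemma Kv_int k : is_RInt (fun t => w t k) 0 (1/4) (Kv k).
Proof.
  pose proof (cK_pos k) as Hc. set (c := cK k) in *.
  set (F := fun t => PI * (-1)^k * 2 * (- t^2 * cos (c*t)/c + 2*t*sin(c*t)/c^2 + 2*cos(c*t)/c^3)).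
  replace (Kv k) with (minus (F (1/4)) (F 0)).
  2: { unfold F, Kv, minus, plus, opp; simpl. fold c. rewrite Rmult_0_r, cos_0, sin_0. req. field. lra. }
  apply (is_RInt_derive (V:=R_CompleteNormedModule)).
  - intros t Ht. unfold F, w. fold c. auto_derive. auto. req. field. lra.
  - intros t Ht. apply (ex_derive_continuous (K:=R_AbsRing) (V:=R_NormedModule)).
    unfold w. auto_derive. auto.
Qed.

Lemma psum_Kv_int N : is_RInt (fun t => psum (w t) N) 0 (1/4) (psum Kv N).
Proof.
  induction N.
  - simpl. replace 0 with (scal (1/4 - 0) 0) at 2. apply (is_RInt_const (V:=R_NormedModule)).
    unfold scal; simpl; unfold mult; simpl. req; ring.
  - simpl psum. apply (is_RInt_ext (V:=R_NormedModule) (fun t => plus (psum (w t) N) (w t N))).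
    intros; unfold plus; simpl; req; ring.
    apply (is_RInt_plus (V:=R_NormedModule)); auto. apply Kv_int.
Qed.

Definition gg (t : R) : R := PI * t^2 / cos (PI * t).
Definition dgg (t : R) : R := PI * (2 * t * cos (PI * t) + PI * t^2 * sin (PI * t)) / (cos (PI * t))^2.

Lemma sqrt2_facts : 0 < sqrt 2 /\ sqrt 2 * sqrt 2 = 2 /\ sqrt 2 < 3/2.
Proof.
  assert (0 < sqrt 2) by (apply sqrt_lt_R0; lra).
  assert (sqrt 2 * sqrt 2 = 2) by (apply sqrt_sqrt; lra).
  split; auto. split; auto. nra.
Qed.

Lemma cos_lb_q t : 0 <= t <= 1/4 -> 1 / sqrt 2 <= cos (PI * t).
Proof.
  intros Ht. pose proof PI_gt3. rewrite <- cos_PI4.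
  apply cos_decr_1; nra.
Qed.

Lemma cos_sq_lb t : 0 <= t <= 1/4 -> 1/2 <= cos (PI * t) ^ 2.
Proof.
  intros Ht. pose proof (cos_lb_q t Ht). destruct sqrt2_facts as [H1 [H2 H3]].
  assert (E : (1/sqrt 2)^2 = / (sqrt 2 * sqrt 2)) by (simpl; field; lra).
  rewrite H2 in E. replace (1/2) with ((1/sqrt 2)^2) by (rewrite E; field). assert (0 < 1 / sqrt 2) by (apply Rdiv_lt_0_compat; lra). simpl. nra.
Qed.

Lemma dgg_bound t : 0 <= t <= 1/4 -> Rabs (dgg t) <= 6.
Proof.
  intros Ht. pose proof (cos_sq_lb t Ht). pose proof (cos_pos_small t Ht).
  pose proof PI_gt3. pose proof PI_4.
  assert (0 <= sin (PI * t)) by (apply sin_ge_0; nra).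
  assert (sin (PI * t) <= 1) by apply SIN_bound.
  assert (cos (PI * t) <= 1) by apply COS_bound.
  unfold dgg. set (c0 := cos (PI * t)) in *. set (s0 := sin (PI*t)) in *.
  assert (A1 : 0 <= 2 * t * c0) by (apply Rmult_le_pos; lra).
  assert (A2 : 2 * t * c0 <= 2 * t) by nra.
  assert (A3 : 0 <= t^2 <= 1/16) by (simpl; split; nra).
  assert (A4 : 0 <= PI * t^2) by nra.
  assert (A5 : PI * t^2 <= 1/4) by nra.
  assert (A6 : 0 <= PI * t^2 * s0) by nra.
  assert (A7 : PI * t^2 * s0 <= 1/4) by nra.
  assert (0 <= 2 * t * c0 + PI * t^2 * s0) by lra.
  assert (2 * t * c0 + PI * t^2 * s0 <= 3/4) by lra.
  rewrite Rabs_right. 2: { apply Rle_ge. unfold Rdiv. apply Rmult_le_pos. nra. apply Rlt_le, Rinv_0_lt_compat; nra. }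
  unfold Rdiv. apply (Rmult_le_reg_r (c0^2)). nra.
  rewrite Rmult_assoc, Rinv_l by nra. nra.
Qed.

Lemma gg_quarter : Rabs (gg (1/4)) <= 3/8.
Proof.
  unfold gg. replace (PI * (1/4)) with (PI/4) by field. rewrite cos_PI4.
  destruct sqrt2_facts as [H1 [H2 H3]]. pose proof PI_gt3. pose proof PI_4.
  replace (PI * (1/4)^2 / (1 / sqrt 2)) with (PI * sqrt 2 / 16) by (field; lra).
  rewrite Rabs_right. 2: { apply Rle_ge. unfold Rdiv. apply Rmult_le_pos. nra. lra. }
  nra.
Qed.

Lemma mN_pos N : 2 * (INR N + 1) <= mN N.
Proof. unfold mN. pose proof (pos_INR N). pose proof PI_gt3. nra. Qed.

Lemma rem_int N : exists v : R, is_RInt (rem N) 0 (1/4) v /\ Rabs v <= 1 / (INR N + 1).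
Proof.
  pose proof (mN_pos N) as Hm. pose proof (pos_INR N) as HN. set (m := mN N) in *.
  assert (Hm0 : 0 < m) by lra.
  set (G := fun t => - (PI * t^2 / cos (PI * t)) * cos (m * t) / m).
  set (Gp := fun t => gg t * sin (m * t) - dgg t * cos (m * t) / m).
  assert (H1 : is_RInt Gp 0 (1/4) (minus (G (1/4)) (G 0))).
  { apply (is_RInt_derive (V:=R_CompleteNormedModule)).
    - intros t Ht. rewrite Rmin_left, Rmax_right in Ht by lra.
      pose proof (cos_pos_small t Ht).
      unfold G, Gp, gg, dgg. auto_derive. lra. req. field. lra.
    - intros t Ht. rewrite Rmin_left, Rmax_right in Ht by lra.
      pose proof (cos_pos_small t Ht).
      apply (ex_derive_continuous (K:=R_AbsRing) (V:=R_NormedModule)).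
      unfold Gp, gg, dgg. auto_derive. repeat split; apply Rgt_not_eq; nra. }
  set (h2 := fun t => dgg t * cos (m * t) / m).
  assert (H2 : ex_RInt h2 0 (1/4)).
  { apply (ex_RInt_continuous (V:=R_CompleteNormedModule)).
    intros t Ht. rewrite Rmin_left, Rmax_right in Ht by lra.
    pose proof (cos_pos_small t Ht).
    apply (ex_derive_continuous (K:=R_AbsRing) (V:=R_NormedModule)).
    unfold h2, dgg. auto_derive. repeat split; apply Rgt_not_eq; nra. }
  set (I2 := RInt h2 0 (1/4)).
  assert (H2' : is_RInt h2 0 (1/4) I2) by (apply (RInt_correct (V:=R_CompleteNormedModule)); auto).
  assert (HB2 : Rabs I2 <= (1/4 - 0) * (6 / m)).
  { refine (norm_RInt_le_const (V:=R_NormedModule) _ 0 (1/4) _ _ ltac:(lra) _ H2').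
    intros t Ht. unfold norm; simpl; unfold abs; simpl. unfold h2.
    unfold Rdiv. rewrite !Rabs_mult. rewrite (Rabs_right (/m)) by (apply Rle_ge, Rlt_le, Rinv_0_lt_compat; lra).
    pose proof (dgg_bound t Ht). pose proof (COS_bound (m*t)).
    assert (Rabs (cos (m * t)) <= 1) by (apply Rabs_le; lra).
    assert (0 < / m) by (apply Rinv_0_lt_compat; lra).
    apply Rmult_le_compat_r. lra.
    replace 6 with (6 * 1) by ring. apply Rmult_le_compat; auto; apply Rabs_pos. }
  exists ((-1)^N * (minus (G (1/4)) (G 0) + I2)). split.
  - apply (is_RInt_ext (V:=R_NormedModule) (fun t => scal ((-1)^N) (plus (Gp t) (h2 t)))).
    + intros t Ht. rewrite Rmin_left, Rmax_right in Ht by lra.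
      pose proof (cos_pos_small t ltac:(lra)).
      unfold scal, plus; simpl; unfold mult; simpl. unfold Gp, h2, rem, gg. fold m. req. field. lra.
    + apply (is_RInt_scal (V:=R_NormedModule)). apply (is_RInt_plus (V:=R_NormedModule)); auto.
  - assert (HG0 : G 0 = 0) by (unfold G; req; field; pose proof (cos_pos_small 0 ltac:(lra)); lra).
    assert (HG : Rabs (G (1/4)) <= (3/8) / m).
    { unfold G. replace (- (PI * (1 / 4) ^ 2 / cos (PI * (1 / 4))) * cos (m * (1 / 4)) / m)
        with (- (gg (1/4) * cos (m * (1/4)) * / m)) by (pose proof (cos_pos_small (1/4) ltac:(lra)); unfold gg; req; field; lra).
      rewrite Rabs_Ropp, !Rabs_mult. rewrite (Rabs_right (/m)) by (apply Rle_ge, Rlt_le, Rinv_0_lt_compat; lra).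
      pose proof gg_quarter. pose proof (COS_bound (m*(1/4))).
      assert (Rabs (cos (m * (1/4))) <= 1) by (apply Rabs_le; lra).
      assert (0 < / m) by (apply Rinv_0_lt_compat; lra).
      assert (Rabs (gg (1/4)) * Rabs (cos (m * (1/4))) <= 3/8) by
        (replace (3/8) with (3/8*1) by ring; apply Rmult_le_compat; auto; apply Rabs_pos).
      apply (Rle_trans _ (3/8 * /m)). apply Rmult_le_compat_r; lra. right; reflexivity. }
    unfold minus, plus, opp; simpl. rewrite HG0.
    rewrite Rabs_mult, pow_1_abs, Rmult_1_l.
    replace (G (1/4) + - 0 + I2) with (G (1/4) + I2) by ring.
    eapply Rle_trans. apply Rabs_triang.
    apply (Rle_trans _ ((3/8)/m + (1/4 - 0) * (6/m))). lra.
    replace ((3/8)/m + (1/4 - 0) * (6/m)) with ((15/8) / m) by (field; lra).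
    apply (Rmult_le_reg_r (m * (INR N + 1))). nra.
    replace (15 / 8 / m * (m * (INR N + 1))) with (15/8 * (INR N + 1)) by (field; lra).
    replace (1 / (INR N + 1) * (m * (INR N + 1))) with m by (field; lra).
    lra.
Qed.

Lemma rmin_q : Rmin 0 (1/4) = 0.
Proof. apply Rmin_left; lra. Qed.
Lemma rmax_q : Rmax 0 (1/4) = 1/4.
Proof. apply Rmax_right; lra. Qed.

Lemma Ip_approx N : Rabs (Ip - psum Kv N) <= 1 / (INR N + 1).
Proof.
  destruct (rem_int N) as [v [Hv Hb]].
  assert (E : Ip = psum Kv N + v).
  { unfold Ip. apply (is_RInt_unique (V:=R_CompleteNormedModule)).
    apply (is_RInt_ext (V:=R_NormedModule) (fun t => plus (psum (w t) N) (rem N t))).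
    - intros t Ht. rewrite rmin_q, rmax_q in Ht.
      assert (Ht' : 0 <= t <= 1/4) by (destruct Ht; split; left; assumption).
      rewrite (tfun_split t N Ht'). unfold plus; simpl; reflexivity.
    - apply (is_RInt_plus (V:=R_NormedModule)). apply psum_Kv_int. exact Hv. }
  rewrite E. replace (psum Kv N + v - psum Kv N) with v by (req; ring). exact Hb.
Qed.

Lemma Kv_lim : is_lim_seq (psum Kv) Ip.
Proof.
  apply (is_lim_seq_ext (fun N => Ip - (Ip - psum Kv N))). intros; ring.
  replace (Finite Ip) with (Finite (Ip - 0)) by (f_equal; ring).
  apply is_lim_seq_minus'. apply is_lim_seq_const.
  apply (is_lim_seq_le_le (fun N => - (1 / (INR N + 1))) _ (fun N => 1 / (INR N + 1))).
  - intros N. pose proof (Ip_approx N) as B. apply abs_le_inv in B. lra.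
  - replace (Finite 0) with (Rbar_opp 0) by (simpl; f_equal; ring). apply -> is_lim_seq_opp. apply lim_C_inv_n.
  - apply lim_C_inv_n.
Qed.


Lemma Kv_gen k : Kv k = (-1)^k * (- cos (cK k * (1/4)) / (16 * (INR k + 1))
   + sin (cK k * (1/4)) / (4 * (INR k + 1)^2 * PI) + (cos (cK k * (1/4)) - 1) / (2 * (INR k + 1)^3 * PI^2)).
Proof.
  unfold Kv. pose proof (pos_INR k). pose proof PI_gt3. cbv zeta.
  set (th := cK k * (1/4)). unfold cK. field. lra.
Qed.

Lemma theta_eq j i : cK (4*j + i) * (1/4) = (INR i + 1) * (PI/2) + 2 * INR j * PI.
Proof. unfold cK. rewrite plus_INR, mult_INR. simpl. field. Qed.

Lemma m1_pow j i : (-1)^(4*j + i) = (-1)^i.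
Proof. rewrite pow_add, pow_mult. replace ((-1)^4) with 1 by (simpl; ring). rewrite pow1. ring. Qed.

Lemma INR_4j j i : INR (4*j + i) + 1 = 4 * INR j + (INR i + 1).
Proof. rewrite plus_INR, mult_INR. simpl. ring. Qed.

Definition Acat (j : nat) : R := 1 / (4 * INR j + 1)^2 - 1 / (4 * INR j + 3)^2.
Definition Bln (j : nat) : R := 1 / (4 * INR j + 4) - 1 / (4 * INR j + 2).
Definition Cz (j : nat) : R := - 1 / (2 * (4 * INR j + 1)^3) + 1 / (4 * INR j + 2)^3 - 1 / (2 * (4 * INR j + 3)^3).

Lemma Kv_i j i : Kv (4*j+i) = (-1)^i * (- cos ((INR i+1)*(PI/2)) / (16 * (4 * INR j + (INR i + 1)))
   + sin ((INR i+1)*(PI/2)) / (4 * (4 * INR j + (INR i + 1))^2 * PI)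
   + (cos ((INR i+1)*(PI/2)) - 1) / (2 * (4 * INR j + (INR i + 1))^3 * PI^2)).
Proof. rewrite Kv_gen, theta_eq, m1_pow, INR_4j, cos_period, sin_period. reflexivity. Qed.

Lemma block_eq j : Kv (4*j) + Kv (4*j+1) + Kv (4*j+2) + Kv (4*j+3)
  = / (4 * PI) * Acat j + / 16 * Bln j + / PI^2 * Cz j.
Proof.
  pose proof (pos_INR j). pose proof PI_gt3.
  assert (E0 : Kv (4*j) = Kv (4*j+0)) by (f_equal; lia). rewrite E0.
  rewrite !Kv_i. simpl INR.
  replace ((0+1) * (PI/2)) with (PI/2) by ring.
  replace ((1+1) * (PI/2)) with PI by field.
  replace ((1+1+1) * (PI/2)) with (3 * (PI/2)) by ring.
  replace ((1+1+1+1) * (PI/2)) with (2 * PI) by field.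
  rewrite cos_PI2, sin_PI2, cos_PI, sin_PI, cos_3PI2, sin_3PI2, cos_2PI, sin_2PI.
  unfold Acat, Bln, Cz. field. lra.
Qed.

Lemma psum4 a M : psum a (4*M) = psum (fun j => a (4*j)%nat + a (4*j+1)%nat + a (4*j+2)%nat + a (4*j+3)%nat) M.
Proof.
  induction M. reflexivity.
  replace (4 * S M)%nat with (S (S (S (S (4*M))))) by lia. rewrite !psum_S, IHM.
  replace (S (4*M)) with (4*M+1)%nat by lia. replace (S (4*M+1)) with (4*M+2)%nat by lia.
  replace (S (4*M+2)) with (4*M+3)%nat by lia. ring.
Qed.

Lemma psum2 a M : psum a (2*M) = psum (fun j => a (2*j)%nat + a (2*j+1)%nat) M.
Proof.
  induction M. reflexivity.
  replace (2 * S M)%nat with (S (S (2*M))) by lia. rewrite !psum_S, IHM.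
  replace (S (2*M)) with (2*M+1)%nat by lia. ring.
Qed.

Lemma Kv4 M : psum Kv (4*M) = / (4 * PI) * psum Acat M + / 16 * psum Bln M + / PI^2 * psum Cz M.
Proof.
  rewrite psum4. rewrite (psum_ext _ (fun j => / (4 * PI) * Acat j + / 16 * Bln j + / PI^2 * Cz j)).
  2: { intros k _. apply block_eq. }
  rewrite !psum_plus, !psum_scal. ring.
Qed.


Lemma filterlim_mul k : (0 < k)%nat -> filterlim (fun n => (k * n)%nat) eventually eventually.
Proof. intros Hk P [N HN]. exists N. intros n Hn. apply HN. nia. Qed.

Lemma tele_bound_gen (f : nat -> R) C : 0 <= C ->
  (forall n, 0 <= f n /\ f n * ((INR n + 1) * (INR n + 2)) <= C) ->
  forall n, Rabs (f n) <= C * (/ (INR n + 1) - / (INR n + 2)).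
Proof.
  intros HC H n. destruct (H n) as [H1 H2]. pose proof (pos_INR n).
  rewrite Rabs_right by lra.
  replace (C * (/ (INR n + 1) - / (INR n + 2))) with (C / ((INR n + 1) * (INR n + 2))) by (field; lra).
  apply (Rmult_le_reg_r ((INR n + 1) * (INR n + 2))). nra.
  replace (C / ((INR n + 1) * (INR n + 2)) * ((INR n + 1) * (INR n + 2))) with C by (field; lra). lra.
Qed.

Definition ct (n : nat) : R := (-1) ^ n / (INR (2 * n + 1)) ^ 2.

Lemma ct_bound n : Rabs (ct n) <= 2 * (/ (INR n + 1) - / (INR n + 2)).
Proof.
  pose proof (pos_INR n) as HN.
  assert (E : Rabs (ct n) = 1 / (2 * INR n + 1)^2).
  { unfold ct. rewrite plus_INR, mult_INR. simpl INR. unfold Rdiv. rewrite Rabs_mult, pow_1_abs.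
    rewrite Rabs_right. field. nra. apply Rle_ge, Rlt_le, Rinv_0_lt_compat. nra. }
  rewrite E. rewrite <- (Rabs_right (1 / (2 * INR n + 1)^2)) by (apply Rle_ge, Rlt_le, Rdiv_lt_0_compat; nra).
  apply (tele_bound_gen (fun n => 1 / (2 * INR n + 1)^2)). lra.
  intros m. pose proof (pos_INR m). split.
  - apply Rlt_le, Rdiv_lt_0_compat; nra.
  - replace (1 / (2 * INR m + 1) ^ 2 * ((INR m + 1) * (INR m + 2))) with (((INR m + 1) * (INR m + 2)) / (2 * INR m + 1) ^ 2) by (field; lra).
    apply (Rmult_le_reg_r ((2 * INR m + 1) ^ 2)). nra.
    replace ((INR m + 1) * (INR m + 2) / (2 * INR m + 1) ^ 2 * (2 * INR m + 1) ^ 2) with ((INR m + 1) * (INR m + 2)) by (field; lra).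
    simpl. nra.
Qed.

Lemma ct_lim : is_lim_seq (psum ct) catalan.
Proof.
  destruct (tele_ex ct 2 ct_bound) as [l Hl].
  unfold catalan. fold ct. rewrite (is_series_unique ct l). auto. apply is_series_psum; auto.
Qed.

Lemma Acat_lim : is_lim_seq (psum Acat) catalan.
Proof.
  apply (is_lim_seq_ext (fun M => psum ct (2*M))).
  - intros M. rewrite psum2. apply psum_ext. intros j _. unfold ct, Acat.
    rewrite !pow_add, !pow_mult. replace ((-1)^2) with 1 by (simpl; ring). rewrite pow1.
    repeat rewrite ?plus_INR, ?mult_INR. simpl INR. field. pose proof (pos_INR j). split; lra.
  - apply (is_lim_seq_subseq (psum ct) catalan (fun M => (2*M)%nat)). apply filterlim_mul; lia. apply ct_lim.
Qed.

Definition zt (n : nat) : R := / (INR (S n)) ^ 3.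
Definition od (i : nat) : R := 1 / (2 * INR i + 1) ^ 3.

Lemma zt_bound n : Rabs (zt n) <= 2 * (/ (INR n + 1) - / (INR n + 2)).
Proof.
  pose proof (pos_INR n) as HN.
  assert (E : zt n = 1 / (INR n + 1)^3) by (unfold zt; rewrite S_INR; field; lra).
  rewrite E. apply (tele_bound_gen (fun n => 1 / (INR n + 1)^3)). lra.
  intros m. pose proof (pos_INR m). split.
  - apply Rlt_le, Rdiv_lt_0_compat; [lra | apply pow_lt; lra].
  - replace (1 / (INR m + 1) ^ 3 * ((INR m + 1) * (INR m + 2))) with ((INR m + 2) / (INR m + 1) ^ 2) by (field; lra).
    apply (Rmult_le_reg_r ((INR m + 1) ^ 2)). nra.
    replace ((INR m + 2) / (INR m + 1) ^ 2 * (INR m + 1) ^ 2) with (INR m + 2) by (field; lra).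
    simpl. nra.
Qed.

Lemma od_bound n : Rabs (od n) <= 2 * (/ (INR n + 1) - / (INR n + 2)).
Proof.
  pose proof (pos_INR n) as HN. unfold od.
  apply (tele_bound_gen (fun n => 1 / (2 * INR n + 1)^3)). lra.
  intros m. pose proof (pos_INR m). split.
  - apply Rlt_le, Rdiv_lt_0_compat; [lra | apply pow_lt; lra].
  - replace (1 / (2 * INR m + 1) ^ 3 * ((INR m + 1) * (INR m + 2))) with (((INR m + 1) * (INR m + 2)) / (2 * INR m + 1) ^ 3) by (field; lra).
    apply (Rmult_le_reg_r ((2 * INR m + 1) ^ 3)). apply pow_lt; lra.
    replace ((INR m + 1) * (INR m + 2) / (2 * INR m + 1) ^ 3 * (2 * INR m + 1) ^ 3) with ((INR m + 1) * (INR m + 2)) by (field; lra).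
    simpl. nra.
Qed.

Lemma zt_lim : is_lim_seq (psum zt) zeta3.
Proof.
  destruct (tele_ex zt 2 zt_bound) as [l Hl].
  unfold zeta3. fold zt. rewrite (is_series_unique zt l). auto. apply is_series_psum; auto.
Qed.

Lemma od_lim : exists lam : R, is_lim_seq (psum od) lam /\ lam = 7/8 * zeta3.
Proof.
  destruct (tele_ex od 2 od_bound) as [lam Hl]. exists lam. split; auto.
  assert (E : forall M, psum zt (2*M) = psum od M + / 8 * psum zt M).
  { intros M. rewrite psum2. rewrite <- psum_scal, <- psum_plus. apply psum_ext. intros j _.
    unfold zt, od. rewrite !S_INR. repeat rewrite ?plus_INR, ?mult_INR. simpl INR. field. pose proof (pos_INR j). lra. }
  assert (L : zeta3 = lam + / 8 * zeta3).
  { apply (lim_uniq (fun M => psum zt (2*M))).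
    - apply (is_lim_seq_subseq (psum zt) zeta3 (fun M => (2*M)%nat)). apply filterlim_mul; lia. apply zt_lim.
    - apply (is_lim_seq_ext (fun M => psum od M + / 8 * psum zt M)). intros; rewrite E; auto.
      apply is_lim_seq_plus'. auto. apply (is_lim_seq_scal_l _ (/8) zeta3). apply zt_lim. }
  lra.
Qed.

Lemma Cz_lim : is_lim_seq (psum Cz) (- 21 / 64 * zeta3).
Proof.
  destruct od_lim as [lam [Hl Hlam]].
  apply (is_lim_seq_ext (fun M => - / 2 * psum od (2*M) + / 8 * psum od M)).
  - intros M. rewrite psum2. rewrite <- !psum_scal, <- psum_plus. apply psum_ext. intros j _.
    unfold od, Cz. repeat rewrite ?plus_INR, ?mult_INR. simpl INR. field. pose proof (pos_INR j). lra.
  - replace (- 21 / 64 * zeta3) with (- / 2 * lam + / 8 * lam) by (rewrite Hlam; field).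
    apply is_lim_seq_plus'.
    + apply (is_lim_seq_scal_l _ (- / 2) lam).
      apply (is_lim_seq_subseq (psum od) lam (fun M => (2*M)%nat)). apply filterlim_mul; lia. auto.
    + apply (is_lim_seq_scal_l _ (/ 8) lam). auto.
Qed.

Definition ah (i : nat) : R := (-1) ^ i / (INR i + 1).

Lemma ah_int i : is_RInt (fun x => (-1)^i * x^i) 0 1 (ah i).
Proof.
  pose proof (pos_INR i).
  set (F := fun x => (-1)^i * x^(S i) / (INR i + 1)).
  replace (ah i) with (minus (F 1) (F 0)).
  2: { unfold F, ah, minus, plus, opp; simpl. rewrite pow1. req. field. lra. }
  apply (is_RInt_derive (V:=R_CompleteNormedModule)).
  - intros x Hx. unfold F. auto_derive. auto. change (match i with 0%nat => 1 | S _ => INR i + 1 end) with (INR (S i)). rewrite S_INR. req. field. lra.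
  - intros x Hx. apply (ex_derive_continuous (K:=R_AbsRing) (V:=R_NormedModule)). auto_derive. auto.
Qed.

Lemma pow_int n : is_RInt (fun x => x^n) 0 1 (/ (INR n + 1)).
Proof.
  pose proof (pos_INR n).
  set (F := fun x => x^(S n) / (INR n + 1)).
  replace (/ (INR n + 1)) with (minus (F 1) (F 0)).
  2: { unfold F, minus, plus, opp; simpl. rewrite pow1. req. field. lra. }
  apply (is_RInt_derive (V:=R_CompleteNormedModule)).
  - intros x Hx. unfold F. auto_derive. auto. change (match n with 0%nat => 1 | S _ => INR n + 1 end) with (INR (S n)). rewrite S_INR. req. field. lra.
  - intros x Hx. apply (ex_derive_continuous (K:=R_AbsRing) (V:=R_NormedModule)). auto_derive. auto.
Qed.

Lemma psum_ah_int n : is_RInt (fun x => psum (fun i => (-1)^i * x^i) n) 0 1 (psum ah n).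
Proof.
  induction n.
  - simpl. replace 0 with (scal (1 - 0) 0) at 2. apply (is_RInt_const (V:=R_NormedModule)).
    unfold scal; simpl; unfold mult; simpl. req; ring.
  - simpl psum. apply (is_RInt_ext (V:=R_NormedModule) (fun x => plus (psum (fun i => (-1)^i * x^i) n) ((-1)^n * x^n))).
    intros; unfold plus; simpl; req; ring.
    apply (is_RInt_plus (V:=R_NormedModule)); auto. apply ah_int.
Qed.

Lemma geom_alt x n : 0 <= x -> psum (fun i => (-1)^i * x^i) n = (1 - (-1)^n * x^n) / (1 + x).
Proof.
  intros Hx. induction n.
  - simpl. field. lra.
  - rewrite psum_S, IHn. simpl. field. lra.
Qed.

Lemma ln2_int : is_RInt (fun x => / (1 + x)) 0 1 (ln 2).
Proof.
  replace (ln 2) with (minus (ln (1 + 1)) (ln (1 + 0))).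
  2: { unfold minus, plus, opp; simpl. rewrite Rplus_0_r, ln_1. req. replace (1+1) with 2 by ring. ring. }
  apply (is_RInt_derive (V:=R_CompleteNormedModule) (fun x => ln (1 + x))).
  - intros x Hx. rewrite Rmin_left, Rmax_right in Hx by lra. auto_derive. lra. req. field. lra.
  - intros x Hx. rewrite Rmin_left, Rmax_right in Hx by lra.
    apply (ex_derive_continuous (K:=R_AbsRing) (V:=R_NormedModule)). auto_derive. lra.
Qed.

Lemma ah_approx n : Rabs (ln 2 - psum ah n) <= / (INR n + 1).
Proof.
  pose proof (is_RInt_minus _ _ _ _ _ _ ln2_int (psum_ah_int n)) as HI.
  refine (norm_RInt_le (V:=R_NormedModule) _ (fun x => x^n) 0 1 _ _ ltac:(lra) _ HI (pow_int n)).
  intros x Hx. unfold minus, plus, opp, norm; simpl; unfold abs; simpl.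
  rewrite geom_alt by lra.
  replace (/ (1 + x) + - ((1 - (-1) ^ n * x ^ n) / (1 + x))) with ((-1)^n * x^n / (1 + x)) by (field; lra).
  unfold Rdiv. rewrite !Rabs_mult, pow_1_abs, Rmult_1_l.
  rewrite Rabs_right by (apply Rle_ge, pow_le; lra).
  rewrite Rabs_right by (apply Rle_ge, Rlt_le, Rinv_0_lt_compat; lra).
  assert (0 <= x^n) by (apply pow_le; lra).
  assert (/ (1 + x) <= 1). { rewrite <- Rinv_1. apply Rinv_le_contravar; lra. }
  nra.
Qed.

Lemma ah_lim : is_lim_seq (psum ah) (ln 2).
Proof.
  apply (is_lim_seq_ext (fun N => ln 2 - (ln 2 - psum ah N))). intros; ring.
  replace (Finite (ln 2)) with (Finite (ln 2 - 0)) by (f_equal; ring).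
  apply is_lim_seq_minus'. apply is_lim_seq_const.
  apply (is_lim_seq_le_le (fun N => - (1 / (INR N + 1))) _ (fun N => 1 / (INR N + 1))).
  - intros N. pose proof (ah_approx N) as B. apply abs_le_inv in B. unfold Rdiv. lra.
  - replace (Finite 0) with (Rbar_opp 0) by (simpl; f_equal; ring). apply -> is_lim_seq_opp. apply lim_C_inv_n.
  - apply lim_C_inv_n.
Qed.

Lemma Bln_lim : is_lim_seq (psum Bln) (- / 2 * ln 2).
Proof.
  apply (is_lim_seq_ext (fun M => - / 2 * psum ah (2*M))).
  - intros M. rewrite psum2, <- psum_scal. apply psum_ext. intros j _.
    unfold ah, Bln. rewrite !pow_add, !pow_mult. replace ((-1)^2) with 1 by (simpl; ring). rewrite pow1.
    repeat rewrite ?plus_INR, ?mult_INR. simpl INR. field. pose proof (pos_INR j). lra.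
  - apply (is_lim_seq_scal_l _ (- / 2) (ln 2)).
    apply (is_lim_seq_subseq (psum ah) (ln 2) (fun M => (2*M)%nat)). apply filterlim_mul; lia. apply ah_lim.
Qed.


Lemma Ip_val : Ip = / (4 * PI) * catalan + / 16 * (- / 2 * ln 2) + / PI^2 * (- 21 / 64 * zeta3).
Proof.
  apply (lim_uniq (fun M => psum Kv (4*M))).
  - apply (is_lim_seq_subseq (psum Kv) Ip (fun M => (4*M)%nat)). apply filterlim_mul; lia. apply Kv_lim.
  - apply (is_lim_seq_ext (fun M => / (4 * PI) * psum Acat M + / 16 * psum Bln M + / PI^2 * psum Cz M)).
    intros; rewrite Kv4; auto.
    apply is_lim_seq_plus'. apply is_lim_seq_plus'.
    + apply (is_lim_seq_scal_l _ _ catalan). apply Acat_lim.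
    + apply (is_lim_seq_scal_l _ _ (- / 2 * ln 2)). apply Bln_lim.
    + apply (is_lim_seq_scal_l _ _ (- 21 / 64 * zeta3)). apply Cz_lim.
Qed.

Lemma exp_pow_n x n : exp x ^ n = exp (INR n * x).
Proof.
  induction n. simpl. rewrite Rmult_0_l, exp_0. auto.
  rewrite S_INR. simpl. rewrite IHn, <- exp_plus. f_equal. ring.
Qed.

Lemma ln_sqrt2 : ln (sqrt 2) = ln 2 / 2.
Proof.
  assert (H : 0 < sqrt 2) by (apply sqrt_lt_R0; lra).
  assert (E : ln 2 = ln (sqrt 2) + ln (sqrt 2)).
  { rewrite <- ln_mult by auto. rewrite sqrt_sqrt by lra. auto. }
  lra.
Qed.

Theorem corollary2p7 :
  zeta3 = 4 * PI ^ 2 / 21 * ln (exp (4 * catalan / PI) * (C3 (1 / 4)) ^ 16 / sqrt 2).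
Proof.
  rewrite C3_quarter, exp_pow_n, <- exp_plus.
  assert (H : 0 < sqrt 2) by (apply sqrt_lt_R0; lra).
  unfold Rdiv at 2. rewrite ln_mult. 2: apply exp_pos. 2: apply Rinv_0_lt_compat; auto.
  rewrite ln_exp, ln_Rinv, ln_sqrt2 by auto.
  rewrite Ip_val. pose proof PI_gt3. simpl INR. field. lra.
Qed.
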